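(* Assume (A1), $t>0$ and $x\in\mathrm{dom}\,J+t\,\mathrm{int}\,\mathrm{dom}\,H^*$. Then there exist unique $\bar u,\bar p\in\mathbb{R}^n$ with $$\bar u=\operatorname*{argmin}_{u\in\mathbb{R}^n}\Big\{tH^*\Big(\frac{x-u}{t}\Big)+J(u)\Big\},\qquad \bar p=\operatorname*{argmax}_{p\in\mathbb{R}^n}\{\langle p,x\rangle-tH(p)-J^*(p)\}.$$ Moreover, for $\bar u,\bar p\in\mathbb{R}^n$ the following are equivalent: (a) $\bar u$ and $\bar p$ solve these two problems respectively; (b) $x=\bar u+t\nabla H(\bar p)$ and $J(\bar u)+J^*(\bar p)-\langle\bar p,\bar u\rangle=0$. Additionally, $$\min_{u\in\mathbb{R}^n}\Big\{tH^*\Big(\frac{x-u}{t}\Big)+J(u)\Big\}=\max_{p\in\mathbb{R}^n}\{\langle p,x\rangle-tH(p)-J^*(p)\}.$$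
   Context: $\Gamma_0(\mathbb{R}^n)$ denotes the set of proper, convex, lower semicontinuous functions $\mathbb{R}^n\to\mathbb{R}\cup\{+\infty\}$; $f^*$ is the Legendre–Fenchel transform. A function $g$ is 1-coercive if $g(x)/\|x\|\to+\infty$ as $\|x\|\to\infty$. A function $f\in\Gamma_0(\mathbb{R}^n)$ is Legendre if: $\mathrm{int}\,\mathrm{dom}\,f\neq\emptyset$; $f$ is differentiable on $\mathrm{int}\,\mathrm{dom}\,f$; $\partial f(x)=\emptyset$ for $x\in\mathrm{dom}\,f\setminus\mathrm{int}\,\mathrm{dom}\,f$ and $\partial f(x)=\{\nabla f(x)\}$ on $\mathrm{int}\,\mathrm{dom}\,f$; and $f$ is strictly convex on $\mathrm{int}\,\mathrm{dom}\,f$. Assumption (A1): $J,H\in\Gamma_0(\mathbb{R}^n)$, $J$ is 1-coercive, and $H$ is a Legendre function. *)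

(* Defs.v *)
From HB Require Import structures.
From mathcomp Require Import all_boot all_order all_algebra.
From mathcomp Require Import all_classical all_reals all_analysis.
Set Implicit Arguments. Unset Strict Implicit. Unset Printing Implicit Defensive.
Import Order.TTheory GRing.Theory Num.Theory.
Import numFieldNormedType.Exports.
Local Open Scope classical_set_scope.
Local Open Scope ring_scope.

Section ConvexDefs.
Variables (R : realType) (n : nat).
Notation V := 'rV[R]_n.

Definition dotp (u v : V) : R := \sum_(i < n) u ord0 i * v ord0 i.
Definition enorm (u : V) : R := Num.sqrt (dotp u u).

Definition edom (f : V -> \bar R) : set V := [set x | (f x < +oo)%E].

Definition proper_fun (f : V -> \bar R) : Prop :=
  (forall x, f x != -oo%E) /\ (exists x, (f x < +oo)%E).

Definition convex_fun (f : V -> \bar R) : Prop :=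
  forall x y (l : R), edom f x -> edom f y -> 0 < l -> l < 1 ->
    (f ((1 - l) *: x + l *: y)%R <= (1 - l)%:E * f x + l%:E * f y)%E.

Definition lsc_fun (f : V -> \bar R) : Prop :=
  forall x (a : R), (a%:E < f x)%E -> \forall y \near x, (a%:E < f y)%E.

Definition Gamma0 (f : V -> \bar R) : Prop :=
  [/\ proper_fun f, convex_fun f & lsc_fun f].

Definition lf_conj (f : V -> \bar R) : V -> \bar R :=
  fun p => ereal_sup [set ((dotp p x)%:E - f x)%E | x in [set: V]].

Definition coercive1 (g : V -> \bar R) : Prop :=
  forall M : R, exists r : R, forall x, r < enorm x ->
    (M%:E < g x * (enorm x)^-1%:E)%E.

Definition subdiff (f : V -> \bar R) (x : V) : set V :=
  [set p | forall y, (f x + (dotp p (y - x))%:E <= f y)%E].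

Definition freal (f : V -> \bar R) : V -> R := fun x => fine (f x).

Definition grad (f : V -> \bar R) (x : V) : V :=
  \row_(i < n) ('D_(delta_mx ord0 i) (freal f) x : R).

Definition Legendre (f : V -> \bar R) : Prop :=
  Gamma0 f /\ [/\ interior (edom f) !=set0,
      (forall x, interior (edom f) x -> differentiable (freal f) x),
      (forall x, edom f x -> ~ interior (edom f) x -> subdiff f x = set0),
      (forall x, interior (edom f) x -> subdiff f x = [set grad f x]) &
      (forall x y (l : R), interior (edom f) x -> interior (edom f) y ->
          x != y -> 0 < l -> l < 1 ->
          (f ((1 - l) *: x + l *: y)%R < (1 - l)%:E * f x + l%:E * f y)%E)].

Definition is_minimizer (F : V -> \bar R) (u : V) : Prop :=
  forall v, (F u <= F v)%E.
Definition is_maximizer (G : V -> \bar R) (p : V) : Prop :=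
  forall q, (G q <= G p)%E.

End ConvexDefs.

(* Main.v *)
Require Import Defs.
From HB Require Import structures.
From mathcomp Require Import all_boot all_order all_algebra.
From mathcomp Require Import all_classical all_reals all_analysis.
From mathcomp Require Import lra ring.
Import Order.TTheory GRing.Theory Num.Theory.
Import numFieldNormedType.Exports.
Local Open Scope classical_set_scope.
Local Open Scope ring_scope.
Set Implicit Arguments. Unset Strict Implicit. Unset Printing Implicit Defensive.

Section Basic.

Variables (R : realType) (n : nat).
Local Notation V := 'rV[R]_n.

Lemma dotpC (u v : V) : dotp u v = dotp v u.
Proof. by rewrite /dotp; apply: eq_bigr => i _; rewrite mulrC. Qed.

Lemma dotpDr (u v w : V) : dotp u (v + w) = dotp u v + dotp u w.
Proof. by rewrite /dotp -big_split; apply: eq_bigr => i _; rewrite mxE mulrDr. Qed.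

Lemma dotpZr (u v : V) (a : R) : dotp u (a *: v) = a * dotp u v.
Proof. by rewrite /dotp mulr_sumr; apply: eq_bigr => i _; rewrite mxE mulrCA. Qed.

Lemma dotpNr (u v : V) : dotp u (- v) = - dotp u v.
Proof. by rewrite -scaleN1r dotpZr mulN1r. Qed.

Lemma dotpBr (u v w : V) : dotp u (v - w) = dotp u v - dotp u w.
Proof. by rewrite dotpDr dotpNr. Qed.

Lemma dotp0r (u : V) : dotp u 0 = 0.
Proof. by rewrite -(scale0r (0 : V)) dotpZr mul0r. Qed.

Lemma dotpDl (u v w : V) : dotp (v + w) u = dotp v u + dotp w u.
Proof. by rewrite dotpC dotpDr !(dotpC u). Qed.

Lemma dotpZl (u v : V) (a : R) : dotp (a *: v) u = a * dotp v u.
Proof. by rewrite dotpC dotpZr dotpC. Qed.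

Lemma dotpNl (u v : V) : dotp (- v) u = - dotp v u.
Proof. by rewrite dotpC dotpNr dotpC. Qed.

Lemma dotpBl (u v w : V) : dotp (v - w) u = dotp v u - dotp w u.
Proof. by rewrite dotpDl dotpNl. Qed.

Lemma dotp0l (u : V) : dotp 0 u = 0.
Proof. by rewrite dotpC dotp0r. Qed.

Lemma dotpp_ge0 (u : V) : 0 <= dotp u u.
Proof. by apply: sumr_ge0 => i _; rewrite -expr2 sqr_ge0. Qed.

Lemma dotppD (u v : V) : dotp (u + v) (u + v) = dotp u u + 2 * dotp u v + dotp v v.
Proof. rewrite dotpDl !dotpDr (dotpC v u); ring. Qed.

Lemma dotppB (u v : V) : dotp (u - v) (u - v) = dotp u u - 2 * dotp u v + dotp v v.
Proof. by rewrite dotppD dotpNr dotpNl dotpNr opprK; ring. Qed.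

Lemma dotppZ (u : V) (s : R) : dotp (s *: u) (s *: u) = s ^+ 2 * dotp u u.
Proof. by rewrite dotpZl dotpZr; ring. Qed.

Lemma coord_le_dotpp (u : V) i : u ord0 i ^+ 2 <= dotp u u.
Proof.
rewrite /dotp (bigD1 i) //= -expr2 lerDl.
by apply: sumr_ge0 => j _; rewrite -expr2 sqr_ge0.
Qed.

Lemma dotpp_eq0 (u : V) : dotp u u = 0 -> u = 0.
Proof.
move=> h; apply/rowP => i; rewrite mxE.
have := coord_le_dotpp u i; rewrite h => h2.
apply/eqP; rewrite -sqrf_eq0; apply/eqP/le_anti; rewrite h2 sqr_ge0 //.
Qed.

Lemma coord_le_enorm (u : V) i : `|u ord0 i| <= enorm u.
Proof.
rewrite /enorm -(sqrtr_sqr (u ord0 i)) ler_sqrt //; last exact: dotpp_ge0.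
exact: coord_le_dotpp.
Qed.

Lemma dotp_le_sum (p u : V) : `|dotp p u| <= (\sum_i `|p ord0 i|) * enorm u.
Proof.
rewrite /dotp mulr_suml; apply: le_trans (ler_norm_sum _ _ _) _.
apply: ler_sum => i _; rewrite normrM ler_wpM2l //; exact: coord_le_enorm.
Qed.

Lemma sum_continuous (f : 'I_n -> V -> R) :
  (forall i, continuous (f i)) -> continuous (fun v => \sum_i f i v).
Proof.
move=> fc.
suff : forall s : seq 'I_n, continuous (fun v => \sum_(i <- s) f i v) by apply.
elim=> [|i s ih].
  under eq_fun do rewrite big_nil. exact: cst_continuous.
under eq_fun do rewrite big_cons.
by move=> v; apply: continuousD; [exact: fc | exact: ih].
Qed.

Lemma dotp_continuous (p : V) : continuous (fun v : V => dotp p v).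
Proof.
rewrite /dotp; apply: sum_continuous => i v.
apply: continuousM; first exact: cst_continuous.
exact: coord_continuous.
Qed.

Lemma dotp_continuous_l (z : V) : continuous (fun v : V => dotp v z).
Proof.
have -> : (fun v : V => dotp v z) = (fun v => dotp z v).
  by apply/funext => v; rewrite dotpC.
exact: dotp_continuous.
Qed.

Lemma dotpp_continuous (c : V) : continuous (fun v : V => dotp (v - c) (v - c)).
Proof.
rewrite /dotp; apply: sum_continuous => i v.
have hc : continuous (fun v : V => (v - c) ord0 i).
  move=> w.
  have -> : (fun v : V => (v - c) ord0 i) = (fun v : V => v ord0 i) - (fun=> c ord0 i).
    by apply/funext => z /=; rewrite !mxE.
  apply: continuousB; [exact: coord_continuous | exact: cst_continuous].
by apply: continuousM; apply: hc.
Qed.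

Lemma small_s (a b : R) :
  (forall s, 0 < s -> s < 1 -> 0 <= a + s * b) -> 0 <= a.
Proof.
move=> h; rewrite leNgt; apply/negP => a0.
pose s := Num.min (1/2) (- a / (2 * (`|b| + 1))).
have b1 : 0 < `|b| + 1 by rewrite ltr_wpDl.
have s0 : 0 < s by rewrite lt_min; apply/andP; split => //; rewrite divr_gt0 // ?oppr_gt0 // mulr_gt0.
have s1 : s < 1 by rewrite gt_min; apply/orP; left; lra.
have := h s s0 s1.
have : s * b <= s * `|b| by apply: ler_wpM2l; [exact: ltW | exact: ler_norm].
have : s <= - a / (2 * (`|b| + 1)) by rewrite ge_min lexx orbT.
move=> sle sb.
have hq : - a / (2 * (`|b| + 1)) * (`|b| + 1) = - a / 2.
  by field; rewrite gt_eqF.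
have nb : 0 <= `|b| by [].
nra.
Qed.

Lemma delta_norm i : `|delta_mx ord0 i : V| <= 1.
Proof.
have -> : `|delta_mx ord0 i : V| = mx_norm (delta_mx ord0 i : V) by [].
rewrite mx_normrE; apply: bigmax_le => // k _.
by rewrite mxE; case: (_ && _); rewrite ?normr1 ?normr0.
Qed.

Lemma int_ball (A : set V) (b0 : V) : interior A b0 ->
  exists2 d : R, 0 < d & forall i (s : R), `|s| <= d -> A (b0 + s *: delta_mx ord0 i).
Proof.
move=> /nbhs_ballP [e e0 sub]; exists (e / 2); first by rewrite divr_gt0.
move=> i s hs; apply: sub; rewrite -ball_normE /ball_ /= opprD addNKr normrN normrZ.
have hd : `|s| * `|delta_mx ord0 i : V| <= `|s|.
  by rewrite -[leRHS]mulr1; apply: ler_wpM2l => //; exact: delta_norm.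
rewrite /= in e0; lra.
Qed.
Lemma dotp_delta (p : V) i : dotp p (delta_mx ord0 i) = p ord0 i.
Proof.
rewrite /dotp (bigD1 i) //= big1 ?addr0; first by rewrite mxE !eqxx mulr1.
by move=> j /negbTE ji; rewrite mxE ji andbF mulr0.
Qed.

End Basic.
Section Lsc.
Variables (R : realType) (n : nat).
Local Notation V := 'rV[R]_n.
Local Open Scope ereal_scope.

Lemma cont_gt (g : V -> R) x a : continuous g -> (a < g x)%R ->
  \forall y \near x, (a < g y)%R.
Proof. by move=> gc h; have := gc x; move=> /cvgr_gt; move/(_ a h). Qed.

Lemma lsc_cst (c : \bar R) : lsc_fun (fun _ : V => c).
Proof. move=> x a h; near=> y; exact h. Unshelve. end_near. Qed.

Lemma lsc_cont (g : V -> R) : continuous g -> lsc_fun (fun v => (g v)%:E).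
Proof.
move=> gc x a; rewrite lte_fin => h.
have H := cont_gt gc h.
near=> y; rewrite lte_fin; exact: (near H y).
Unshelve. end_near.
Qed.

Lemma split_lt (a : R) (u v : \bar R) : u != -oo -> v != -oo ->
  a%:E < u + v -> exists b : R, (a - b)%:E < u /\ b%:E < v.
Proof.
move=> uN vN; case: u uN => [u| |] // _; case: v vN => [v| |] // _.
- rewrite -EFinD lte_fin => h; exists (v - (u + v - a) / 2)%R.
  by rewrite !lte_fin; split; lra.
- move=> _; exists (a - u + 1)%R; rewrite !lte_fin ltry; split => //; lra.
- move=> _; exists (v - 1)%R; rewrite !lte_fin ltry; split => //; lra.
- by move=> _; exists 0%R; rewrite !ltry.
Qed.

Lemma lsc_add (f g : V -> \bar R) : (forall v, f v != -oo) -> (forall v, g v != -oo) ->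
  lsc_fun f -> lsc_fun g -> lsc_fun (fun v => f v + g v).
Proof.
move=> fN gN lf lg x a h.
have [b [hb1 hb2]] := split_lt (fN x) (gN x) h.
have H1 := lf _ _ hb1; have H2 := lg _ _ hb2.
near=> y.
have h1 : (a - b)%:E < f y by exact: (near H1 y).
have h2 : b%:E < g y by exact: (near H2 y).
by have := lteD h1 h2; rewrite -EFinD subrK.
Unshelve. end_near.
Qed.

Lemma lsc_scale (t : R) (f : V -> \bar R) : (0 < t)%R ->
  lsc_fun f -> lsc_fun (fun v => t%:E * f v).
Proof.
move=> t0 lf x a h.
have h1 : (a / t)%:E < f x.
  move: h; case: (f x) => [r| |] //.
  - by rewrite -EFinM !lte_fin ltr_pdivrMr // mulrC.
  - by rewrite ltry.
  - by rewrite mulrNy gtr0_sg // mul1e.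
have H := lf _ _ h1; near=> y; have : (a / t)%:E < f y by exact: (near H y).
case: (f y) => [r| |] //.
- by rewrite -EFinM !lte_fin ltr_pdivrMr // mulrC.
- by move=> _; rewrite mulry gtr0_sg // mul1e ltry.
Unshelve. end_near.
Qed.

Lemma lsc_comp (f : V -> \bar R) (h : V -> V) : continuous h -> lsc_fun f ->
  lsc_fun (fun v => f (h v)).
Proof.
move=> hc lf x a hx.
have := lf _ _ hx.
by move=> /(hc x).
Qed.

Lemma lsc_conj_aff (f : V -> \bar R) (A : V -> V) :
  (forall z, continuous (fun w => dotp (A w) z)) ->
  lsc_fun (fun w => lf_conj f (A w)).
Proof.
move=> hA y a /ereal_sup_gt [e [z _ <-]] hz.
have lz : lsc_fun (fun w => (dotp (A w) z)%:E - f z).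
  move: hz; case: (f z) => [r| |] // _.
  - apply: (@lsc_add (fun w => (dotp (A w) z)%:E) (fun=> (- r)%:E)) => //.
      apply: lsc_cont; exact: hA.
    exact: lsc_cst.
  - apply: (@lsc_add (fun w => (dotp (A w) z)%:E) (fun=> +oo)) => //.
      apply: lsc_cont; exact: hA.
    exact: lsc_cst.
have key := lz y a hz.
near=> w; have hw : a%:E < (dotp (A w) z)%:E - f z by exact: (near key w).
apply: lt_le_trans hw _.
by apply: ereal_sup_ubound; exists z.
Unshelve. all: end_near.
Qed.

Lemma lsc_conj (f : V -> \bar R) : lsc_fun (lf_conj f).
Proof. exact: (@lsc_conj_aff f id (fun z => @dotp_continuous_l R n z)). Qed.

Lemma cont_aff (z x : V) (c : R) :
  continuous (fun u : V => c * (dotp x z - dotp u z))%R.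
Proof.
have -> : (fun u : V => c * (dotp x z - dotp u z))%R =
  ((fun=> c) \* ((fun=> dotp x z) - (fun u : V => dotp u z)))%R by apply/funext.
move=> u; apply: continuousM; first exact: cst_continuous.
apply: continuousB; first exact: cst_continuous.
exact: dotp_continuous_l.
Qed.

End Lsc.
Section Attain.
Variables (R : realType) (n : nat).
Local Notation V := 'rV[R]_n.
Local Open Scope ereal_scope.

Lemma ereal_between (m u : \bar R) : m < u -> exists a : R, m < a%:E /\ a%:E < u.
Proof.
case: m => [m| |]; case: u => [u| |] // h.
- by move: h; rewrite lte_fin => h; exists ((m + u) / 2)%R; rewrite !lte_fin; split; lra.
- by exists (m + 1)%R; rewrite lte_fin ltry; split => //; lra.
- by exists (u - 1)%R; rewrite lte_fin ltNyr; split => //; lra.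
- by exists 0%R; rewrite ltry ltNyr.
Qed.

Lemma attain_compact (f : V -> \bar R) (K : set V) : compact K -> lsc_fun f ->
  K !=set0 -> exists2 z, K z & forall y, K y -> f z <= f y.
Proof.
move=> cK lf [z0 Kz0].
set m := ereal_inf (f @` K).
have mle y : K y -> m <= f y by move=> Ky; apply: ereal_inf_lbound; exists y.
have [mE|mN] := eqVneq m +oo.
  exists z0 => // y Ky; have := mle y Ky; rewrite mE leye_eq => /eqP ->.
  exact: leey.
pose D := [set e : R | m < e%:E].
pose B := fun e : R => [set v | K v /\ f v < e%:E].
have FF : Filter (filter_from D B).
  apply: filter_from_filter.
    have [e [he _]] : exists a : R, m < a%:E /\ a%:E < +oo by apply: ereal_between; rewrite ltey.
    by exists e.
  move=> i j Di Dj; exists (Order.min i j).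
    by rewrite /D /= EFin_min lt_min Di Dj.
  move=> v [Kv hv]; split; split => //; apply: lt_le_trans hv _;
    by rewrite lee_fin ge_min lexx ?orbT.
have PF : ProperFilter (filter_from D B).
  apply: filter_from_proper => e De.
  have [_ [v Kv <-] fv] := ereal_inf_lt De.
  by exists v.
have FK : filter_from D B K.
  have [e [he _]] : exists a : R, m < a%:E /\ a%:E < +oo by apply: ereal_between; rewrite ltey.
  by exists e => // v [].
have [z [Kz clz]] := cK _ PF FK.
exists z => // y Ky; apply: le_trans (mle y Ky).
rewrite leNgt; apply/negP => hmz.
have [a [ma az]] := ereal_between hmz.
have Nz := lf z a az.
have [v [[Kv fva] fav]] := clz (B a) [set w | a%:E < f w] (ex_intro2 _ _ a ma (fun _ h => h)) Nz.
by move: (lt_trans fav fva); rewrite ltxx.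
Qed.

Lemma attain (f : V -> \bar R) (a : V) (r : R) : lsc_fun f ->
  (forall v : V, (exists i, r < `|v ord0 i|)%R -> f a < f v) ->
  exists z, forall y, f z <= f y.
Proof.
move=> lf out.
pose r' := Order.max r 0%R.
pose K := [set v : V | forall i, `[(- r')%R, r']%classic (v ord0 i)].
have cK : compact K.
  by apply: (@rV_compact _ _ (fun=> `[(- r')%R, r']%classic)) => i; exact: segment_compact.
have K0 : K !=set0.
  exists (0 : V)%R => i; rewrite /= mxE in_itv /=; apply/andP; split; last by rewrite le_max lexx orbT.
  by rewrite lerNl oppr0 le_max lexx orbT.
have [z Kz zmin] := attain_compact cK lf K0.
have outK v : ~ K v -> f a < f v.
  move=> nK; apply: out.
  apply/not_existsP => /= hall; apply: nK => i.
  have /negP := hall i; rewrite -leNgt => hi.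
  rewrite /= in_itv /= -ler_norml; apply: le_trans hi _.
  by rewrite le_max lexx.
have za : f z <= f a.
  have [Ka|nKa] := pselect (K a); first exact: zmin.
  by have := outK a nKa; rewrite ltxx.
exists z => y; have [Ky|nKy] := pselect (K y); first exact: zmin.
by apply: le_trans za (ltW (outK y nKy)).
Qed.

End Attain.
Section Conj.
Variables (R : realType) (n : nat).
Local Notation V := 'rV[R]_n.
Local Open Scope ereal_scope.

Lemma fin_ex (u : \bar R) : u != -oo -> u != +oo -> exists r : R, u = r%:E.
Proof. by case: u => [r| |] // _ _; exists r. Qed.

Lemma conj_ge (f : V -> \bar R) p y : (dotp y p)%:E - f p <= lf_conj f y.
Proof. by apply: ereal_sup_ubound; exists p. Qed.

Lemma conj_ge_r (f : V -> \bar R) p y fp : f p = fp%:E ->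
  (dotp y p - fp)%:E <= lf_conj f y.
Proof. by move=> E; rewrite EFinB -E; exact: conj_ge. Qed.

Lemma conj_le (f : V -> \bar R) y c :
  (forall p, (dotp y p)%:E - f p <= c) -> lf_conj f y <= c.
Proof. by move=> h; apply: ge_ereal_sup => _ [p _ <-]; exact: h. Qed.

Lemma conj_le_r (f : V -> \bar R) y (c : R) :
  (forall p fp, f p = fp%:E -> (dotp y p - fp <= c)%R) ->
  (forall p, f p != -oo) -> lf_conj f y <= c%:E.
Proof.
move=> h fN; apply: conj_le => p.
move: (fN p) (h p); case: (f p) => [r| |] // _ hr.
- by rewrite -EFinB lee_fin; exact: hr.
- by rewrite addeNy leNye.
Qed.

Lemma conj_notNy (f : V -> \bar R) p0 y : f p0 != +oo -> lf_conj f y != -oo.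
Proof.
move=> h; apply/negP => /eqP E.
have := conj_ge f p0 y; rewrite E leeNy_eq.
by move: h; case: (f p0).
Qed.

Lemma subgrad_conj (f : V -> \bar R) p g fp : f p = fp%:E ->
  (forall v, f v != -oo) ->
  (forall q, f p + (dotp g (q - p))%:E <= f q) ->
  lf_conj f g = (dotp g p - fp)%:E.
Proof.
move=> E fN sg; apply/le_anti/andP; split; last exact: conj_ge_r.
apply: conj_le_r => // q fq Eq.
have := sg q; rewrite E Eq -EFinD lee_fin dotpBr; lra.
Qed.

Lemma conj_eq_subgrad (f : V -> \bar R) p g fp : f p = fp%:E ->
  lf_conj f g = (dotp g p - fp)%:E ->
  forall q, f p + (dotp g (q - p))%:E <= f q.
Proof.
move=> E C q; have := conj_ge f q g; rewrite C E.
case: (f q) => [r| |].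
- by rewrite -EFinB -EFinD !lee_fin dotpBr => h; lra.
- by move=> _; rewrite leey.
- by rewrite /= addey // leye_eq.
Qed.

End Conj.
Section Main.
Variables (R : realType) (n : nat) (J H : 'rV[R]_n -> \bar R) (t : R)
  (x a b : 'rV[R]_n).
Hypotheses (GJ : Gamma0 J) (GH : Gamma0 H) (cJ : coercive1 J) (LH : Legendre H)
  (t0 : (0 < t)%R) (Ja : edom J a) (bint : interior (edom (lf_conj H)) b)
  (xab : x = a + t *: b).
Local Notation V := 'rV[R]_n.
Local Open Scope ereal_scope.

Definition Fp u := t%:E * lf_conj H (t^-1 *: (x - u)) + J u.
Definition Gd p := (dotp p x)%:E - t%:E * H p - lf_conj J p.

Let JN v : J v != -oo. Proof. by case: GJ => [[]]. Qed.
Let HN v : H v != -oo. Proof. by case: GH => [[]]. Qed.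
Let Jlsc : lsc_fun J. Proof. by case: GJ. Qed.
Let Hlsc : lsc_fun H. Proof. by case: GH. Qed.
Let Jconv : convex_fun J. Proof. by case: GJ. Qed.
Let Hconv : convex_fun H. Proof. by case: GH. Qed.
Let Hp0 : exists p0, H p0 < +oo. Proof. by case: GH => [[]]. Qed.
Let HcN y : lf_conj H y != -oo.
Proof. by have [p0 hp0] := Hp0; apply: (conj_notNy _ (p0:=p0)); rewrite -ltey. Qed.
Let JcN p : lf_conj J p != -oo.
Proof. by apply: (conj_notNy _ (p0:=a)); rewrite -ltey. Qed.

Let tE : t%:E * +oo = +oo. Proof. by rewrite mulry gtr0_sg // mul1e. Qed.

Lemma Gd_Hinf p : H p = +oo -> Gd p = -oo.
Proof. by move=> E; rewrite /Gd E tE /= addeNy addNye. Qed.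

Lemma Gd_Jcinf p : lf_conj J p = +oo -> Gd p = -oo.
Proof. by move=> E; rewrite /Gd E /= addeNy. Qed.

Lemma Fp_Jinf u : J u = +oo -> Fp u = +oo.
Proof.
move=> E; rewrite /Fp E addey //.
move: (HcN (t^-1 *: (x - u))); case: (lf_conj H _) => [r| |] //= _.
by rewrite tE.
Qed.

Lemma Fp_Hcinf u : lf_conj H (t^-1 *: (x - u)) = +oo -> Fp u = +oo.
Proof. by move=> E; rewrite /Fp E tE addye. Qed.

Lemma tdot (u p : V) : (t * dotp (t^-1 *: (x - u)) p = dotp p x - dotp p u)%R.
Proof.
by rewrite dotpZl mulrA mulfV ?gt_eqF // mul1r dotpC dotpBr.
Qed.

Lemma weak_duality u p : Gd p <= Fp u.
Proof.
set y := t^-1 *: (x - u).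
case EH: (H p) => [hp| |]; last by have := HN p; rewrite EH.
  2: by rewrite Gd_Hinf // leNye.
case EJc: (lf_conj J p) => [jc| |]; last by have := JcN p; rewrite EJc.
  2: by rewrite Gd_Jcinf // leNye.
case EJ: (J u) => [ju| |]; last by have := JN u; rewrite EJ.
  2: by rewrite Fp_Jinf // leey.
case EHc: (lf_conj H y) => [hc| |]; last by have := HcN y; rewrite EHc.
  2: by rewrite Fp_Hcinf // leey.
have FY1 := conj_ge_r y EH; rewrite EHc lee_fin in FY1.
have FY2 := conj_ge_r p EJ; rewrite EJc lee_fin in FY2.
rewrite /Gd /Fp -/y EH EJc EJ EHc -!EFinM -!EFinB -!EFinD lee_fin.
have := ler_wpM2l (ltW t0) FY1; rewrite mulrBr tdot => h.
lra.
Qed.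

Let Lint p : interior (edom H) p -> subdiff H p = [set grad H p].
Proof. by case: LH => _ [_ _ _ h _]; exact: h. Qed.
Let Lbd p : edom H p -> ~ interior (edom H) p -> subdiff H p = set0.
Proof. by case: LH => _ [_ _ h _ _]; exact: h. Qed.

Lemma int_fin p : interior (edom H) p -> exists hp, H p = hp%:E.
Proof.
move=> /interior_subset; rewrite /edom /= => h.
by apply: fin_ex => //; rewrite -ltey.
Qed.

Lemma sum0_fin (u v : \bar R) (c : R) : u != -oo -> v != -oo ->
  u + v - c%:E = 0 -> exists r s, u = r%:E /\ v = s%:E /\ (r + s - c = 0)%R.
Proof.
case: u => [r| |] //; case: v => [s| |] // _ _.
by move=> /eqP; rewrite -EFinN -!EFinD eqe => /eqP h; exists r, s.
Qed.

Lemma b_to_eq (u p : V) : interior (edom H) p -> x = (u + t *: grad H p)%R ->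
  J u + lf_conj J p - (dotp p u)%:E = 0 -> Fp u = Gd p.
Proof.
move=> pint xE J0.
have [hp Ehp] := int_fin pint.
have sg : subdiff H p (grad H p) by rewrite Lint.
have yE : t^-1 *: (x - u) = grad H p.
  by rewrite xE addrC addKr scalerA mulVf ?gt_eqF // scale1r.
have Hc := subgrad_conj Ehp HN sg.
have [ju [jc [Eju [Ejc e0]]]] := sum0_fin (JN u) (JcN p) J0.
rewrite /Fp /Gd yE Hc Ehp Eju Ejc -!EFinM -!EFinB -!EFinD; congr (_%:E).
have := tdot u p; rewrite yE => h.
rewrite mulrBr h; lra.
Qed.

Lemma b_to_a (u p : V) : interior (edom H) p -> x = (u + t *: grad H p)%R ->
  J u + lf_conj J p - (dotp p u)%:E = 0 ->
  is_minimizer Fp u /\ is_maximizer Gd p.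
Proof.
move=> pint xE J0; have E := b_to_eq pint xE J0.
split => v; first by rewrite E; exact: weak_duality.
by rewrite -E; exact: weak_duality.
Qed.
Lemma tHc_notNy (v : V) : t%:E * lf_conj H (t^-1 *: (x - v)) != -oo.
Proof.
have := HcN (t^-1 *: (x - v)); case: (lf_conj H _) => [r| |] //= _.
by rewrite tE.
Qed.

Lemma Fp_lsc : lsc_fun Fp.
Proof.
apply: (@lsc_add _ _ (fun u => t%:E * lf_conj H (t^-1 *: (x - u))) J).
- exact: tHc_notNy.
- exact: JN.
- apply: lsc_scale => //; apply: lsc_conj_aff => z.
  have -> : (fun w => dotp (t^-1 *: (x - w)) z) =
      (fun w => t^-1 * (dotp x z - dotp w z))%R.
    by apply/funext => w; rewrite dotpZl dotpBl.
  exact: cont_aff.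
- exact: Jlsc.
Qed.

Lemma ya : t^-1 *: (x - a) = b.
Proof. by rewrite xab addrC addKr scalerA mulVf ?gt_eqF // scale1r. Qed.

Lemma primal_exists : exists ub, is_minimizer Fp ub.
Proof.
have [hb Ehb] : exists hb, lf_conj H b = hb%:E.
  apply: fin_ex (HcN b) _; rewrite -ltey; exact: (interior_subset bint).
have [ja Eja] := fin_ex (JN a) (negbT (lt_eqF Ja)).
pose fa := (t * hb + ja)%R.
have Efa : Fp a = fa%:E by rewrite /Fp ya Ehb Eja -EFinM -EFinD.
have [p0 hp0] := Hp0; have [h0 Eh0] := fin_ex (HN p0) (negbT (lt_eqF hp0)).
pose S := (\sum_i `|p0 ord0 i|)%R.
pose C := (dotp p0 x - t * h0)%R.
have [r0 hr0] := cJ (S + `|fa| + `|C| + 1)%R.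
have [z zmin] : exists z, forall y, Fp z <= Fp y.
  apply: (@attain _ _ Fp a (Num.max r0 1)%R Fp_lsc) => v [i hi]; rewrite Efa.
  pose e := enorm v.
  have ei : (`|v ord0 i| <= e)%R := coord_le_enorm v i.
  have hm1 : (1 <= Num.max r0 1)%R by rewrite le_max lexx orbT.
  have hm2 : (r0 <= Num.max r0 1)%R by rewrite le_max lexx.
  have e1 : (1 <= e)%R by lra.
  have er : (r0 < e)%R by lra.
  have hJ := hr0 v er.
  case EJ: (J v) => [jv| |]; last by have := JN v; rewrite EJ.
    2: by rewrite Fp_Jinf // ltry.
  case EHc: (lf_conj H (t^-1 *: (x - v))) => [hc| |]; last by have := HcN (t^-1 *: (x - v)); rewrite EHc.
    2: by rewrite Fp_Hcinf // ltry.
  rewrite /Fp EHc EJ -EFinM -EFinD lte_fin.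
  have e0 : (0 < e)%R by apply: lt_le_trans e1.
  rewrite EJ -EFinM lte_fin ltr_pdivlMr // in hJ.
  have FY := conj_ge_r (t^-1 *: (x - v)) Eh0; rewrite EHc lee_fin in FY.
  have := ler_wpM2l (ltW t0) FY; rewrite mulrBr tdot => h.
  have := dotp_le_sum p0 v; rewrite -/S -/e ler_norml => /andP [hd1 hd2].
  pose X := (`|fa| + `|C| + 1)%R.
  have hpos : (0 <= X * (e - 1))%R.
    by apply: mulr_ge0; [rewrite /X addr_ge0 // addr_ge0 | rewrite subr_ge0].
  have E1 : ((S + `|fa| + `|C| + 1) * e = S * e + X * e)%R by rewrite /X; ring.
  have E2 : (X * (e - 1) = X * e - X)%R by ring.
  rewrite E1 in hJ; rewrite E2 in hpos.
  have n1 := ler_norm fa; have n2 := ler_norm (- C); rewrite normrN in n2.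
  have EC : C = (dotp p0 x - t * h0)%R by [].
  rewrite /X in hpos hJ.
  lra.
by exists z.
Qed.
Lemma J_lb : exists m : R, forall v, m%:E <= J v.
Proof.
have [r1 hr1] := cJ 1%R.
pose r' := Num.max r1 0%R.
pose K := [set v : V | forall i, `[(- r')%R, r']%classic (v ord0 i)].
have cK : compact K.
  by apply: (@rV_compact _ _ (fun=> `[(- r')%R, r']%classic)) => i; exact: segment_compact.
have K0 : K !=set0.
  exists (0 : V)%R => i; rewrite /= mxE in_itv /=; apply/andP; split; last by rewrite le_max lexx orbT.
  by rewrite lerNl oppr0 le_max lexx orbT.
have [z Kz zmin] := attain_compact cK Jlsc K0.
pose m := (if J z is r%:E then Num.min 0 r else 0)%R.
exists m => v.
have [Kv|nKv] := pselect (K v).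
  have := zmin v Kv; rewrite /m; case E: (J z) => [r| |].
  - by move=> h; apply: le_trans h; rewrite lee_fin ge_min lexx orbT.
  - by rewrite leye_eq => /eqP ->; rewrite leey.
  - by have := JN z; rewrite E.
have [i hi] : exists i, (r' < `|v ord0 i|)%R.
  apply/not_existsP => hall; apply: nKv => i.
  have /negP := hall i; rewrite -leNgt => h.
  by rewrite /= in_itv /= -ler_norml.
have e1 : (r1 < enorm v)%R.
  apply: le_lt_trans (lt_le_trans hi (coord_le_enorm v i)); by rewrite le_max lexx.
have e0 : (0 < enorm v)%R.
  apply: le_lt_trans (lt_le_trans hi (coord_le_enorm v i)); by rewrite le_max lexx orbT.
have m0 : (m <= 0)%R by rewrite /m; case: (J z) => [r| |] //; rewrite ge_min lexx.
have := hr1 v e1; case E: (J v) => [r| |].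
- rewrite -EFinM lte_fin ltr_pdivlMr // mul1r => h; rewrite lee_fin; lra.
- by move=> _; rewrite leey.
- by have := JN v; rewrite E.
Qed.
Lemma Fpa : Fp a < +oo.
Proof.
have [hb Ehb] : exists hb, lf_conj H b = hb%:E.
  apply: fin_ex (HcN b) _; rewrite -ltey; exact: (interior_subset bint).
have [ja Eja] := fin_ex (JN a) (negbT (lt_eqF Ja)).
by rewrite /Fp ya Ehb Eja -EFinM -EFinD ltry.
Qed.

Lemma adde_notNy (u v : \bar R) : u != -oo -> v != -oo -> u + v != -oo.
Proof. by case: u => [r| |]; case: v. Qed.

Lemma tH_notNy p : t%:E * H p != -oo.
Proof. by have := HN p; case: (H p) => [r| |] //= _; rewrite tE. Qed.

Section Core.
Variables (ub : V) (m : R).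
Hypotheses (ubmin : is_minimizer Fp ub) (mlb : forall v, m%:E <= J v).

Definition Jt v := J v + ((dotp (v - ub) (v - ub) / 2)%R)%:E.

Lemma JtN v : Jt v != -oo.
Proof. by apply: adde_notNy. Qed.

Lemma Jt_fin v r : J v = r%:E -> Jt v = (r + dotp (v - ub) (v - ub) / 2)%:E.
Proof. by move=> E; rewrite /Jt E -EFinD. Qed.

Lemma Jt_inf v : J v = +oo -> Jt v = +oo.
Proof. by move=> E; rewrite /Jt E addye. Qed.

Lemma Jtc_le p : lf_conj Jt p <= (dotp p ub + dotp p p / 2 - m)%:E.
Proof.
apply: conj_le_r; last exact: JtN.
move=> q jq Eq; case EJ: (J q) => [r| |].
- move: Eq; rewrite (Jt_fin EJ) => /eqP; rewrite eqe => /eqP <-.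
  have := mlb q; rewrite EJ lee_fin => mr.
  have := dotpp_ge0 (p - (q - ub)); rewrite dotppB dotpBr => h.
  lra.
- by move: Eq; rewrite (Jt_inf EJ).
- by have := JN q; rewrite EJ.
Qed.

Lemma JtcN p : lf_conj Jt p != -oo.
Proof.
apply: (conj_notNy _ (p0 := a)).
have [ja Eja] := fin_ex (JN a) (negbT (lt_eqF Ja)).
by rewrite (Jt_fin Eja).
Qed.

Lemma Jtc_fin p : exists r, lf_conj Jt p = r%:E.
Proof.
apply: fin_ex (JtcN p) _.
by apply: negbT; apply: lt_eqF; apply: le_lt_trans (Jtc_le p) _; rewrite ltry.
Qed.

Definition Phi p := t%:E * H p + lf_conj Jt p - (dotp p x)%:E.

Lemma Phi_lsc : lsc_fun Phi.
Proof.
apply: (@lsc_add _ _ (fun p => t%:E * H p + lf_conj Jt p) (fun p => (- dotp p x)%R%:E)).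
- by move=> p; apply: adde_notNy; [exact: tH_notNy | exact: JtcN].
- by [].
- apply: (@lsc_add _ _ (fun p => t%:E * H p) (lf_conj Jt)).
  + exact: tH_notNy.
  + exact: JtcN.
  + exact: lsc_scale.
  + exact: lsc_conj.
- apply: lsc_cont.
  have -> : (fun p : V => - dotp p x)%R = ((fun=> -1) \* (fun p : V => dotp p x))%R.
    by apply/funext => p /=; rewrite mulN1r.
  move=> p; apply: continuousM; first exact: cst_continuous.
  exact: dotp_continuous_l.
Qed.

Lemma Phi_Hinf p : H p = +oo -> Phi p = +oo.
Proof.
move=> E; rewrite /Phi E tE addye ?addye //; exact: JtcN.
Qed.

Lemma dual_reg_exists : exists pt, forall q, Phi pt <= Phi q.
Proof.
have [d d0 hball] := int_ball bint.
pose cH i s := fine (lf_conj H (b + s *: delta_mx ord0 i)).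
have cHE i (s : R) : (`|s| <= d)%R -> lf_conj H (b + s *: delta_mx ord0 i) = (cH i s)%:E.
  move=> hs; rewrite /cH fineK //; apply/fin_numP; split; first exact: HcN.
  by apply: negbT; apply: lt_eqF; exact: (hball i s hs).
pose C := (\sum_i (`|cH i d| + `|cH i (- d)|))%R.
have Ci i : (`|cH i d| + `|cH i (- d)| <= C)%R.
  rewrite /C (bigD1 i) //= lerDl; apply: sumr_ge0 => j _; exact: addr_ge0.
have [p0 hp0] := Hp0; have [h0 Eh0] := fin_ex (HN p0) (negbT (lt_eqF hp0)).
have [jc0 Ejc0] := Jtc_fin p0.
pose phi0 := (t * h0 + jc0 - dotp p0 x)%R.
have Ephi0 : Phi p0 = phi0%:E by rewrite /Phi Eh0 Ejc0 -EFinM -!EFinD.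
have [ja Eja] := fin_ex (JN a) (negbT (lt_eqF Ja)).
have Ejta := Jt_fin Eja; set jta := (ja + _)%R in Ejta.
pose r := ((`|phi0| + t * C + `|jta| + 1) / (t * d))%R.
have [z zmin] : exists z, forall y, Phi z <= Phi y.
  apply: (@attain _ _ Phi p0 r (Phi_lsc)) => p [i hi]; rewrite Ephi0.
  case EH: (H p) => [hp| |]; last by have := HN p; rewrite EH.
    2: by rewrite Phi_Hinf // ltry.
  have [jc Ejc] := Jtc_fin p.
  rewrite /Phi EH Ejc -EFinM -!EFinD lte_fin.
  pose s := (if (0 <= p ord0 i)%R then d else - d)%R.
  have hs : (`|s| <= d)%R by rewrite /s; case: ifP => _; rewrite ?normrN gtr0_norm.
  have sp : (s * p ord0 i = d * `|p ord0 i|)%R.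
    rewrite /s; case: ifP => h.
      by rewrite ger0_norm.
    by rewrite ltr0_norm ?mulrN ?mulNr // ltNge h.
  have FY := conj_ge_r (b + s *: delta_mx ord0 i) EH.
  rewrite cHE // lee_fin in FY.
  rewrite dotpC dotpDr dotpZr dotp_delta sp in FY.
  have FY2 := conj_ge_r p Ejta; rewrite Ejc lee_fin in FY2.
  have hx : dotp p x = (dotp p a + t * dotp p b)%R by rewrite xab dotpDr dotpZr.
  have cb : (cH i s <= C)%R.
    apply: le_trans (Ci i); rewrite /s; case: ifP => _.
      by apply: le_trans (ler_norm _) _; rewrite lerDl.
    by apply: le_trans (ler_norm _) _; rewrite lerDr.
  have td : (0 < t * d)%R by rewrite mulr_gt0.
  have hr : (t * d * r = `|phi0| + t * C + `|jta| + 1)%R.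
    by rewrite /r mulrC -mulrA mulVf ?mulr1 // gt_eqF.
  have hpi : (t * d * r < t * d * `|p ord0 i|)%R by rewrite ltr_pM2l.
  have := ler_wpM2l (ltW t0) FY.
  have n1 := ler_norm phi0; have n2 := ler_norm jta; have n3 := ler_norm (- jta).
  rewrite normrN in n3.
  move=> h1.
  have E3 : (t * (dotp p b + d * `|p ord0 i| - hp) = t * dotp p b + t * d * `|p ord0 i| - t * hp)%R by ring.
  rewrite E3 in h1.
  have E4 : (t * (cH i s) <= t * C)%R by rewrite ler_wpM2l // ltW.
  lra.
by exists z.
Qed.
Section Core2.
Variable pt : V.
Hypothesis ptmin : forall q, Phi pt <= Phi q.

Lemma ub_fin : exists ju, J ub = ju%:E.
Proof.
apply: fin_ex (JN ub) _; apply/negP => /eqP E.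
have := le_lt_trans (ubmin a) Fpa; by rewrite Fp_Jinf // ltxx.
Qed.

Lemma vt_exists : exists vt, forall v,
  Jt vt - (dotp pt vt)%:E <= Jt v - (dotp pt v)%:E.
Proof.
have [ju Eju] := ub_fin.
have psiE : (fun v => Jt v - (dotp pt v)%:E) =
    (fun v => J v + (dotp (v - ub) (v - ub) / 2 - dotp pt v)%R%:E).
  by apply/funext => v; rewrite /Jt EFinB addeA.
pose D := (4 * (`|ju - dotp pt ub| + `|m| + dotp pt pt + `|dotp pt ub|) + 1)%R.
pose rr := (\sum_j `|ub ord0 j| + D)%R.
have [z zmin] : exists z, forall y,
    (fun v => Jt v - (dotp pt v)%:E) z <= (fun v => Jt v - (dotp pt v)%:E) y.
  apply: (@attain _ _ _ ub rr).
    rewrite psiE; apply: (@lsc_add _ _ J (fun v => (dotp (v - ub) (v - ub) / 2 - dotp pt v)%R%:E)) => //.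
    apply: lsc_cont.
    have -> : (fun v : V => dotp (v - ub) (v - ub) / 2 - dotp pt v)%R =
      ((fun v : V => dotp (v - ub) (v - ub)) \* (fun=> 2^-1) - (fun v : V => dotp pt v))%R.
      by apply/funext.
    move=> v; apply: continuousB; last exact: dotp_continuous.
    apply: continuousM; last exact: cst_continuous.
    exact: dotpp_continuous.
  move=> v [i hi] /=.
  rewrite (Jt_fin Eju) subrr dotp0l mul0r addr0 -EFinB.
  case EJ: (J v) => [jv| |]; last by have := JN v; rewrite EJ.
    2: by rewrite (Jt_inf EJ) /= ltry.
  rewrite (Jt_fin EJ) -EFinB lte_fin.
  have := mlb v; rewrite EJ lee_fin => mv.
  have c1 := coord_le_dotpp (v - ub) i; rewrite !mxE in c1.
  have hub : (`|ub ord0 i| <= \sum_j `|ub ord0 j|)%R.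
    by rewrite (bigD1 i) //= lerDl sumr_ge0.
  have hD : (1 <= D)%R.
    rewrite /D lerDr; apply: mulr_ge0 => //.
    by rewrite !addr_ge0 // dotpp_ge0.
  have hvi : (D < `|v ord0 i - ub ord0 i|)%R.
    have := ler_dist_dist (v ord0 i) (ub ord0 i).
    have := ler_norm (`|v ord0 i| - `|ub ord0 i|).
    rewrite /rr in hi; lra.
  have hsq : (D <= (v ord0 i - ub ord0 i) ^+ 2)%R.
    rewrite -real_normK ?num_real // expr2.
    have h0 : (0 <= D)%R by lra.
    have := ler_pM h0 h0 (ltW hvi) (ltW hvi); nra.
  have q0 := dotpp_ge0 (2^-1 *: (v - ub) - pt).
  rewrite dotppB dotppZ dotpZl (dotpC (v - ub) pt) in q0.
  have e2 : dotp pt (v - ub) = (dotp pt v - dotp pt ub)%R by rewrite dotpBr.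
  have E2 : (2 * (2^-1 * dotp pt (v - ub)) = dotp pt (v - ub))%R by field.
  rewrite E2 e2 in q0.
  have n1 := ler_norm (ju - dotp pt ub); have n2 := ler_norm (- m);
  have n3 := ler_norm (dotp pt ub); rewrite normrN in n2.
  rewrite /D in hD hsq.
  have E1 : ((2^-1) ^+ 2 = 1/4 :> R)%R by rewrite expr2; field.
  rewrite E1 in q0.
  lra.
by exists z.
Qed.

Section Core3.
Variable vt : V.
Hypothesis vtmin : forall v, Jt vt - (dotp pt vt)%:E <= Jt v - (dotp pt v)%:E.

Lemma vt_fin : exists jv, J vt = jv%:E.
Proof.
have [ju Eju] := ub_fin.
apply: fin_ex (JN vt) _; apply/negP => /eqP E.
have := vtmin ub; rewrite (Jt_inf E) (Jt_fin Eju) /= leye_eq.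
by rewrite -EFinB.
Qed.

Lemma vec_eq1 (u w : V) (s : R) : ((1 - s) *: u + s *: w = u + s *: (w - u))%R.
Proof. by apply/rowP => j; rewrite !mxE; ring. Qed.

Lemma vec_eq2 (u w c : V) : (u + w - c = (u - c) + w)%R.
Proof. by apply/rowP => j; rewrite !mxE; ring. Qed.

Lemma vec_eq3 (u d : V) : (u + d - u = d)%R.
Proof. by apply/rowP => j; rewrite !mxE; ring. Qed.

Lemma vt_sub jv : J vt = jv%:E -> forall w jw, J w = jw%:E ->
  (jv + dotp (pt - (vt - ub)) (w - vt) <= jw)%R.
Proof.
move=> Ev w jw Ew.
suff : (0 <= jw - jv - dotp (pt - (vt - ub)) (w - vt))%R by lra.
apply: (@small_s _ _ (dotp (w - vt) (w - vt) / 2)) => s s0 s1.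
have dv : edom J vt by rewrite /edom /= Ev ltry.
have dw : edom J w by rewrite /edom /= Ew ltry.
have cv := Jconv dv dw s0 s1.
rewrite Ev Ew -!EFinM -EFinD vec_eq1 in cv.
have [jq Ejq] := fin_ex (JN (vt + s *: (w - vt))%R) (negbT (lt_eqF (le_lt_trans cv (ltry _)))).
rewrite Ejq lee_fin in cv.
have := vtmin (vt + s *: (w - vt))%R.
rewrite (Jt_fin Ev) (Jt_fin Ejq) -!EFinB lee_fin vec_eq2.
rewrite (dotppD (vt - ub) (s *: (w - vt))) dotppZ dotpZr (dotpDr pt vt) dotpZr dotpBl => h.
have key : (0 <= s * (jw - jv - (dotp pt (w - vt) - dotp (vt - ub) (w - vt)) +
    s * (dotp (w - vt) (w - vt) / 2)))%R by nra.
rewrite pmulr_rge0 // in key.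
move: key; rewrite ?dotpBl; lra.
Qed.

Lemma Jt_real w jtw : Jt w = jtw%:E -> exists jw, J w = jw%:E /\
  jtw = (jw + dotp (w - ub) (w - ub) / 2)%R.
Proof.
case EJ: (J w) => [jw| |].
- by rewrite (Jt_fin EJ) => /eqP; rewrite eqe => /eqP <-; exists jw.
- by rewrite (Jt_inf EJ).
- by have := JN w; rewrite EJ.
Qed.

Lemma Jtc_pt jv : J vt = jv%:E ->
  lf_conj Jt pt = (dotp pt vt - (jv + dotp (vt - ub) (vt - ub) / 2))%:E.
Proof.
move=> Ev; apply/le_anti/andP; split; last exact: (conj_ge_r pt (Jt_fin Ev)).
apply: conj_le_r; last exact: JtN.
move=> v jtv Ev'; have := vtmin v; rewrite (Jt_fin Ev) Ev' -!EFinB lee_fin.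
lra.
Qed.

Lemma Jtc_upper jv (h : V) : J vt = jv%:E ->
  lf_conj Jt (pt + h) <= (dotp pt vt - (jv + dotp (vt - ub) (vt - ub) / 2)
     + dotp h vt + dotp h h / 2)%:E.
Proof.
move=> Ev; apply: conj_le_r; last exact: JtN.
move=> w jtw /Jt_real [jw [Ew ->]].
have hs := vt_sub Ev Ew.
move: hs.
have [d ->] : exists d, w = (vt + d)%R by exists (w - vt)%R; rewrite addrC subrK.
rewrite vec_eq3 dotpBl => hs.
rewrite vec_eq2 (dotppD (vt - ub) d) (dotpDl (vt + d) pt h) (dotpDr pt vt d) (dotpDr h vt d).
have q0 := dotpp_ge0 (h - d); rewrite dotppB in q0.
lra.
Qed.

Lemma sum_rule q hq hp : H q = hq%:E -> H pt = hp%:E ->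
  (dotp (x - vt) (q - pt) <= t * (hq - hp))%R.
Proof.
move=> Eq Ep.
have [jv Ev] := vt_fin.
suff : (0 <= t * (hq - hp) - dotp (x - vt) (q - pt))%R by lra.
apply: (@small_s _ _ (dotp (q - pt) (q - pt) / 2)) => s s0 s1.
have dp : edom H pt by rewrite /edom /= Ep ltry.
have dq : edom H q by rewrite /edom /= Eq ltry.
have cv := Hconv dp dq s0 s1.
rewrite Ep Eq -!EFinM -EFinD vec_eq1 in cv.
have [hpq Ehpq] := fin_ex (HN (pt + s *: (q - pt))%R) (negbT (lt_eqF (le_lt_trans cv (ltry _)))).
rewrite Ehpq lee_fin in cv.
have ju := Jtc_upper (s *: (q - pt))%R Ev.
have [jq Ejq] := Jtc_fin (pt + s *: (q - pt))%R.
rewrite Ejq lee_fin dotpZl dotppZ in ju.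
have := ptmin (pt + s *: (q - pt))%R.
rewrite /Phi Ep Ehpq Ejq (Jtc_pt Ev) -!EFinM -!EFinD lee_fin.
rewrite (dotpDl x pt (s *: (q - pt))) (dotpZl x) => h.
have ht := ler_wpM2l (ltW t0) cv.
have E1 : dotp (x - vt) (q - pt) = (dotp (q - pt) x - dotp (q - pt) vt)%R.
  by rewrite dotpC dotpBr.
rewrite E1.
have key : (0 <= s * (t * (hq - hp) - (dotp (q - pt) x - dotp (q - pt) vt) +
    s * (dotp (q - pt) (q - pt) / 2)))%R by nra.
by rewrite pmulr_rge0 // in key.
Qed.

Lemma core3 : interior (edom H) pt /\ x = (ub + t *: grad H pt)%R /\
  J ub + lf_conj J pt - (dotp pt ub)%:E = 0.
Proof.
have [jv Ev] := vt_fin.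
have [ju Eju] := ub_fin.
have [hp Ep] : exists hp, H pt = hp%:E.
  apply: fin_ex (HN pt) _; apply/negP => /eqP E.
  have [p0 hp0] := Hp0; have [h0 Eh0] := fin_ex (HN p0) (negbT (lt_eqF hp0)).
  have [jc0 Ejc0] := Jtc_fin p0.
  by have := ptmin p0; rewrite Phi_Hinf // /Phi Eh0 Ejc0 -EFinM -!EFinD leye_eq.
have sg : forall q, H pt + (dotp (t^-1 *: (x - vt)) (q - pt))%:E <= H q.
  move=> q; case Eq: (H q) => [hq| |].
  - rewrite Ep -EFinD lee_fin dotpZl.
    have h := sum_rule Eq Ep.
    have : (t^-1 * dotp (x - vt) (q - pt) <= hq - hp)%R.
      have ti : (0 <= t^-1)%R by rewrite invr_ge0 ltW.
      by have := ler_wpM2l ti h; rewrite mulrA mulVf ?gt_eqF // mul1r.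
    lra.
  - by rewrite leey.
  - by have := HN q; rewrite Eq.
have Hcy := subgrad_conj Ep HN sg.
have [hcu Ehcu] : exists r, lf_conj H (t^-1 *: (x - ub)) = r%:E.
  apply: fin_ex (HcN _) _; apply/negP => /eqP E.
  by have := le_lt_trans (ubmin a) Fpa; rewrite Fp_Hcinf // ltxx.
have FY := conj_ge_r (t^-1 *: (x - ub)) Ep; rewrite Ehcu lee_fin in FY.
have Jub : Jt ub = ju%:E by rewrite (Jt_fin Eju) subrr dotp0l mul0r addr0.
have FY2 := conj_ge_r pt Jub; rewrite (Jtc_pt Ev) lee_fin in FY2.
have hmin := ubmin vt; rewrite /Fp Ehcu Eju Hcy Ev -!EFinM -!EFinD lee_fin in hmin.
have := ler_wpM2l (ltW t0) FY; rewrite mulrBr tdot => h1.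
have e1 := tdot vt pt.
rewrite mulrBr e1 in hmin.
have sq0 : (dotp (vt - ub) (vt - ub) <= 0)%R by lra.
have vE : vt = ub.
  apply/eqP; rewrite -subr_eq0; apply/eqP; apply: dotpp_eq0.
  by apply/le_anti; rewrite sq0 dotpp_ge0.
have jE : jv = ju by move: Ev; rewrite vE Eju => /eqP; rewrite eqe => /eqP.
have sgJ : forall w, J ub + (dotp pt (w - ub))%:E <= J w.
  move=> w; case Ew: (J w) => [jw| |].
  - have := vt_sub Ev Ew; rewrite vE subrr subr0 Eju -EFinD lee_fin jE; lra.
  - by rewrite leey.
  - by have := JN w; rewrite Ew.
have Jc := subgrad_conj Eju JN sgJ.
have sgy : subdiff H pt (t^-1 *: (x - vt))%R by exact: sg.
have pint : interior (edom H) pt.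
  have [//|nint] := pselect (interior (edom H) pt).
  have dp : edom H pt by rewrite /edom /= Ep ltry.
  by move: sgy; rewrite Lbd.
split => //; split.
- move: sgy; rewrite Lint // => <-.
  by rewrite scalerA mulfV ?gt_eqF // scale1r vE addrC subrK.
- rewrite Eju Jc -EFinN -!EFinD; congr (_%:E); ring.
Qed.

End Core3.

Lemma core2 : exists p, interior (edom H) p /\ x = (ub + t *: grad H p)%R /\
  J ub + lf_conj J p - (dotp p ub)%:E = 0.
Proof. have [vt vtmin] := vt_exists; exists pt; exact: core3 vtmin. Qed.

End Core2.

Lemma core1 : exists p, interior (edom H) p /\ x = (ub + t *: grad H p)%R /\
  J ub + lf_conj J p - (dotp p ub)%:E = 0.
Proof. have [pt ptmin] := dual_reg_exists; exact: core2 ptmin. Qed.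

End Core.

Lemma core : exists u p, interior (edom H) p /\ x = (u + t *: grad H p)%R /\
  J u + lf_conj J p - (dotp p u)%:E = 0.
Proof.
have [ub ubmin] := primal_exists; have [m mlb] := J_lb.
by exists ub; exact: core1 ubmin mlb.
Qed.
Lemma core_val : exists u0 p0 c, is_minimizer Fp u0 /\ is_maximizer Gd p0 /\
  Fp u0 = c%:E /\ Gd p0 = c%:E.
Proof.
have [u0 [p0 [i0 [x0 z0]]]] := core.
have [mu mx] := b_to_a i0 x0 z0.
have E0 := b_to_eq i0 x0 z0.
have [hp Ehp] := int_fin i0.
have [ju [jc [Eju [Ejc _]]]] := sum0_fin (JN u0) (JcN p0) z0.
exists u0, p0, (dotp p0 x - t * hp - jc)%R; split => //; split => //.
by rewrite E0 /Gd Ehp Ejc -EFinM -!EFinD.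
Qed.

Lemma a_to_b u p : is_minimizer Fp u -> is_maximizer Gd p ->
  [/\ interior (edom H) p, x = (u + t *: grad H p)%R &
      J u + lf_conj J p - (dotp p u)%:E = 0] /\ Fp u = Gd p.
Proof.
move=> umin pmax.
have [u0 [p0 [c [mu0 [mp0 [Fu0 Gp0]]]]]] := core_val.
have Fu : Fp u = c%:E.
  apply/le_anti/andP; split; first by rewrite -Fu0; exact: umin.
  by rewrite -Gp0; apply: le_trans (pmax p0) _; exact: weak_duality.
have Gp : Gd p = c%:E.
  apply/le_anti/andP; split; first by rewrite -Fu; exact: weak_duality.
  by rewrite -Gp0; exact: pmax.
case EH: (H p) => [hp| |]; last by have := HN p; rewrite EH.
  2: by move: Gp; rewrite Gd_Hinf.
case EJc: (lf_conj J p) => [jc| |]; last by have := JcN p; rewrite EJc.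
  2: by move: Gp; rewrite Gd_Jcinf.
case EJ: (J u) => [ju| |]; last by have := JN u; rewrite EJ.
  2: by move: Fu; rewrite Fp_Jinf.
case EHc: (lf_conj H (t^-1 *: (x - u))) => [hc| |]; last by have := HcN (t^-1 *: (x - u)); rewrite EHc.
  2: by move: Fu; rewrite Fp_Hcinf.
have FY1 := conj_ge_r (t^-1 *: (x - u)) EH; rewrite EHc lee_fin in FY1.
have FY2 := conj_ge_r p EJ; rewrite EJc lee_fin in FY2.
move: Fu Gp; rewrite /Fp /Gd EHc EJ EH EJc -!EFinM -!EFinD.
move=> /eqP; rewrite eqe => /eqP Fu /eqP; rewrite eqe => /eqP Gp.
have e1 := tdot u p.
have := ler_wpM2l (ltW t0) FY1; rewrite mulrBr e1 => h1.
have t1 : (t * hc = t * (dotp (t^-1 *: (x - u)) p - hp))%R by rewrite mulrBr e1; lra.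
have hcE : hc = (dotp (t^-1 *: (x - u)) p - hp)%R.
  by apply: (mulfI (negbT (gt_eqF t0))); exact: t1.
have sg := conj_eq_subgrad EH (etrans EHc (congr1 EFin hcE)).
have sgy : subdiff H p (t^-1 *: (x - u))%R by exact: sg.
have pint : interior (edom H) p.
  have [//|nint] := pselect (interior (edom H) p).
  have dp : edom H p by rewrite /edom /= EH ltry.
  by move: sgy; rewrite Lbd.
split; last by rewrite Fu Gp.
split => //.
- move: sgy; rewrite Lint // => <-.
  by rewrite scalerA mulfV ?gt_eqF // scale1r addrC subrK.
- congr (_%:E); lra.
Qed.

Lemma min_unique u1 u2 : is_minimizer Fp u1 -> is_minimizer Fp u2 -> u1 = u2.
Proof.
move=> m1 m2.
have [u0 [p0 [c [mu0 [mp0 _]]]]] := core_val.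
have [[_ x1 _] _] := a_to_b m1 mp0.
have [[_ x2 _] _] := a_to_b m2 mp0.
by apply: (addIr (t *: grad H p0)); rewrite -x1 -x2.
Qed.

Lemma max_unique p1 p2 : is_maximizer Gd p1 -> is_maximizer Gd p2 -> p1 = p2.
Proof.
move=> m1 m2.
have [u0 [p0 [c [mu0 [mp0 [Fu0 Gp0]]]]]] := core_val.
have [[i1 _ _] E1] := a_to_b mu0 m1.
have [[i2 _ _] E2] := a_to_b mu0 m2.
apply/eqP/negP => /negP ne.
have [h1 Eh1] := int_fin i1; have [h2 Eh2] := int_fin i2.
have strict : H ((1 - 2^-1) *: p1 + 2^-1 *: p2)%R <
    (1 - 2^-1)%:E * H p1 + (2^-1)%:E * H p2.
  by case: LH => _ [_ _ _ _ st]; apply: st => //; rewrite ?invr_gt0 // invf_lt1 // ltr1n.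
rewrite Eh1 Eh2 -!EFinM -EFinD in strict.
pose q := ((1 - 2^-1) *: p1 + 2^-1 *: p2)%R.
have [hq Ehq] := fin_ex (HN q) (negbT (lt_eqF (lt_trans strict (ltry _)))).
rewrite -/q Ehq lte_fin in strict.
have G1 : Gd p1 = c%:E by rewrite -E1 Fu0.
have G2 : Gd p2 = c%:E by rewrite -E2 Fu0.
case EJ1: (lf_conj J p1) => [j1| |]; last by have := JcN p1; rewrite EJ1.
  2: by move: G1; rewrite Gd_Jcinf.
case EJ2: (lf_conj J p2) => [j2| |]; last by have := JcN p2; rewrite EJ2.
  2: by move: G2; rewrite Gd_Jcinf.
have Jq : lf_conj J q <= ((1 - 2^-1) * j1 + 2^-1 * j2)%:E.
  apply: conj_le_r; last exact: JN.
  move=> w jw Ew.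
  have f1 := conj_ge_r p1 Ew; have f2 := conj_ge_r p2 Ew.
  rewrite EJ1 lee_fin in f1; rewrite EJ2 lee_fin in f2.
  rewrite /q dotpDl !dotpZl.
  have h12 : (0 <= 2^-1 :> R)%R by rewrite invr_ge0.
  have h11 : (0 <= 1 - 2^-1 :> R)%R by rewrite subr_ge0 invf_le1 // ler1n.
  have := ler_wpM2l h11 f1; have := ler_wpM2l h12 f2.
  lra.
have [jcq Ejcq] := fin_ex (JcN q) (negbT (lt_eqF (le_lt_trans Jq (ltry _)))).
rewrite Ejcq lee_fin in Jq.
have := m1 q; rewrite G1 /Gd Ehq Ejcq -EFinM -!EFinD lee_fin.
move: G1 G2; rewrite /Gd Eh1 Eh2 EJ1 EJ2 -!EFinM -!EFinD.
move=> /eqP; rewrite eqe => /eqP G1 /eqP; rewrite eqe => /eqP G2.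
rewrite /q dotpDl !dotpZl.
have := strict; rewrite -(ltr_pM2l t0) => st.
have E3 : (t * ((1 - 2^-1) * h1 + 2^-1 * h2) = (1 - 2^-1) * (t * h1) + 2^-1 * (t * h2))%R by ring.
rewrite E3 in st.
lra.
Qed.

Lemma main_all : [/\ (exists! u, is_minimizer Fp u), (exists! p, is_maximizer Gd p),
  (forall u p, (is_minimizer Fp u /\ is_maximizer Gd p) <->
     [/\ interior (edom H) p, x = (u + t *: grad H p)%R &
        J u + lf_conj J p - (dotp p u)%:E = 0]) &
  (forall u p, is_minimizer Fp u -> is_maximizer Gd p -> Fp u = Gd p)].
Proof.
have [u0 [p0 [c [mu0 [mp0 _]]]]] := core_val.
split.
- by exists u0; split => // u mu; exact: min_unique mu0 mu.
- by exists p0; split => // p mp; exact: max_unique mp0 mp.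
- move=> u p; split => [[mu mp]|[i xe z]]; first by case: (a_to_b mu mp).
  exact: b_to_a i xe z.
- by move=> u p mu mp; case: (a_to_b mu mp).
Qed.

End Main.


Theorem proposition4p1 (R : realType) (n : nat)
  (J H : 'rV[R]_n -> \bar R) (t : R) (x : 'rV[R]_n) :
  Gamma0 J -> Gamma0 H -> coercive1 J -> Legendre H ->
  0 < t ->
  (exists a b, edom J a /\ interior (edom (lf_conj H)) b /\ x = a + t *: b) ->
  let F := fun u => (t%:E * lf_conj H (t^-1 *: (x - u)) + J u)%E in
  let G := fun p => ((dotp p x)%:E - t%:E * H p - lf_conj J p)%E in
  [/\ (exists! u, is_minimizer F u),
      (exists! p, is_maximizer G p),
      (forall u p, (is_minimizer F u /\ is_maximizer G p) <->
          [/\ interior (edom H) p,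
              x = u + t *: grad H p &
              (J u + lf_conj J p - (dotp p u)%:E = 0)%E]) &
      (forall u p, is_minimizer F u -> is_maximizer G p -> F u = G p)].
Proof.
move=> GJ GH cJ LH t0 [a [b [Ja [bint xab]]]].
exact: (@main_all R n J H t x a b GJ GH cJ LH t0 Ja bint xab).
Qed.
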